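(* Let $R$ be a commutative ring with identity and $M$ a non-zero comultiplication $R$-module. If $G'(M)$ contains a cycle, then the girth of $G'(M)$ is $3$.
   Context: An $R$-module $M$ is a comultiplication module if for every submodule $N$ of $M$ there is an ideal $I$ of $R$ with $N=\mathrm{Ann}_M(I)$. A submodule $N$ of $M$ is large if $N\cap L\neq 0$ for every non-zero submodule $L$ of $M$. The large sum graph $G'(M)$ has as vertex set the set of all non-zero non-large submodules of $M$, and two distinct vertices $N,K$ are adjacent iff $N+K$ is non-large in $M$. *)

(* Defs.v *)
(* Submodules/ideals are represented as (possibly infinite)
   subsets, i.e. predicates [M -> Prop]. *)
From HB Require Import structures.
From mathcomp Require Import all_boot all_order all_algebra.
Set Implicit Arguments. Unset Strict Implicit. Unset Printing Implicit Defensive.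
Import GRing.Theory.
Local Open Scope ring_scope.

Section Defs.
Variable R : comPzRingType.
Variable M : lmodType R.

Definition is_submodule (N : M -> Prop) : Prop :=
  [/\ N 0, (forall x y, N x -> N y -> N (x + y)) & (forall (r : R) x, N x -> N (r *: x))].

Definition is_ideal (I : R -> Prop) : Prop :=
  [/\ I 0, (forall a b, I a -> I b -> I (a + b)) & (forall r a, I a -> I (r * a))].

Definition annM (I : R -> Prop) : M -> Prop := fun m => forall r, I r -> r *: m = 0.

Definition set_eq (N K : M -> Prop) : Prop := forall m, N m <-> K m.

Definition comultiplication_module : Prop :=
  forall N, is_submodule N -> exists I, is_ideal I /\ set_eq N (annM I).

Definition nonzero_sub (N : M -> Prop) : Prop := exists m, N m /\ m <> 0.

Definition large (N : M -> Prop) : Prop :=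
  forall L, is_submodule L -> nonzero_sub L -> exists m, [/\ N m, L m & m <> 0].

Definition sum_sub (N K : M -> Prop) : M -> Prop :=
  fun m => exists a b, [/\ N a, K b & m = a + b].

(* vertices of the large sum graph G'(M) *)
Definition lsg_vertex (N : M -> Prop) : Prop :=
  [/\ is_submodule N, nonzero_sub N & ~ large N].

Definition lsg_adj (N K : M -> Prop) : Prop :=
  [/\ lsg_vertex N, lsg_vertex K, ~ set_eq N K & ~ large (sum_sub N K)].

Definition lsg_cycle (n : nat) (c : nat -> M -> Prop) : Prop :=
  [/\ (3 <= n)%N,
      (forall i, (i < n)%N -> lsg_vertex (c i)),
      (forall i j, (i < n)%N -> (j < n)%N -> i <> j -> ~ set_eq (c i) (c j)) &
      (forall i, (i < n)%N -> lsg_adj (c i) (c (i.+1 %% n)%N))].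

Definition lsg_has_cycle : Prop := exists n c, lsg_cycle n c.

Definition lsg_girth_is (g : nat) : Prop :=
  (exists c, lsg_cycle g c) /\ (forall n c, lsg_cycle n c -> (g <= n)%N).

End Defs.

(* Main.v *)
Require Import Defs.
From HB Require Import structures.
From mathcomp Require Import all_boot all_order all_algebra.
From Stdlib Require Import Classical.
From mathcomp Require Import zify.
Import GRing.Theory.
Local Open Scope ring_scope.

Set Implicit Arguments.
Section Aux.
Variable R : comPzRingType.
Variable M : lmodType R.
Implicit Types X Y Z T S : M -> Prop.

Definition subs S T := forall m, S m -> T m.

Lemma nl_sub S T : subs S T -> ~ large T -> ~ large S.
Proof.
move=> sST nT lS; apply: nT => L sL nzL.
have [m [h1 h2 h3]] := lS L sL nzL; exists m; split => //; exact: sST.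
Qed.

Lemma sum_sub_is X Y : is_submodule X -> is_submodule Y -> is_submodule (sum_sub X Y).
Proof.
move=> [X0 XD XZ] [Y0 YD YZ]; split.
- by exists 0, 0; split => //; rewrite addr0.
- move=> x y [a [b [Ha Hb ->]]] [c [d [Hc Hd ->]]].
  exists (a + c), (b + d); split; [exact: XD|exact: YD|].
  by rewrite addrACA.
- move=> r x [a [b [Ha Hb ->]]]; exists (r *: a), (r *: b); split;
  [exact: XZ|exact: YZ|by rewrite scalerDr].
Qed.

Lemma subs_suml X Y : is_submodule Y -> subs X (sum_sub X Y).
Proof. by move=> [Y0 _ _] m Xm; exists m, 0; split => //; rewrite addr0. Qed.

Lemma subs_sumr X Y : is_submodule X -> subs Y (sum_sub X Y).
Proof. by move=> [X0 _ _] m Ym; exists 0, m; split => //; rewrite add0r. Qed.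

Lemma sum_le X Y T : is_submodule T -> subs X T -> subs Y T -> subs (sum_sub X Y) T.
Proof. by move=> [_ TD _] sX sY m [a [b [Ha Hb ->]]]; apply: TD; auto. Qed.

Lemma set_eq_sym X Y : set_eq X Y -> set_eq Y X.
Proof. by move=> h m; split => /h. Qed.

Definition tri_ok X Y Z :=
  [/\ lsg_vertex X, lsg_vertex Y, lsg_vertex Z,
      [/\ ~ set_eq X Y, ~ set_eq Y Z & ~ set_eq X Z] &
      [/\ ~ large (sum_sub X Y), ~ large (sum_sub Y Z) & ~ large (sum_sub Z X)]].

Lemma tri X Y Z : tri_ok X Y Z -> exists c : nat -> M -> Prop, lsg_cycle 3 c.
Proof.
move=> [vX vY vZ [nXY nYZ nXZ] [lXY lYZ lZX]].
exists (fun i => if i == 0%N then X else if i == 1%N then Y else Z).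
have nYX : ~ set_eq Y X by move=> e; apply: (nXY); apply: set_eq_sym.
have nZY : ~ set_eq Z Y by move=> e; apply: (nYZ); apply: set_eq_sym.
have nZX : ~ set_eq Z X by move=> e; apply: (nXZ); apply: set_eq_sym.
split => //.
- by move=> [|[|[|i]]] //.
- by move=> [|[|[|i]]] [|[|[|j]]] //=.
- by move=> [|[|[|i]]] //= _; split.
Qed.

Lemma vertex_sum X Y : lsg_vertex X -> lsg_vertex Y -> ~ large (sum_sub X Y) ->
  lsg_vertex (sum_sub X Y).
Proof.
move=> [sX [m [Xm m0]] _] [sY _ _] nl; split => //; first exact: sum_sub_is.
by exists m; split => //; apply: subs_suml.
Qed.

Lemma comp_or X Y : lsg_adj X Y ->
  subs X Y \/ subs Y X \/ exists c : nat -> M -> Prop, lsg_cycle 3 c.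
Proof.
move=> [vX vY nXY lXY].
case: (classic (subs X Y)) => [h|h]; first by left.
case: (classic (subs Y X)) => [h'|h']; first by right; left.
right; right; apply: (@tri X Y (sum_sub X Y)).
have [sX _ _] := vX; have [sY _ _] := vY.
have sS := sum_sub_is sX sY.
split => //; first exact: vertex_sum.
- split => //.
  + move=> e; apply: h => m Xm; apply: (proj2 (e m)); exact: subs_suml.
  + move=> e; apply: h' => m Ym; apply: (proj2 (e m)); exact: subs_sumr.
- split => //.
  + apply: nl_sub lXY; apply: sum_le => //; exact: subs_sumr.
  + apply: nl_sub lXY; apply: sum_le => //; exact: subs_suml.
Qed.

Lemma path3 X Y Z : lsg_adj X Y -> lsg_adj Y Z -> ~ set_eq X Z ->
  (exists c : nat -> M -> Prop, lsg_cycle 3 c) \/ (subs Y X /\ subs Y Z).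
Proof.
move=> aXY aYZ nXZ.
have [vX vY nXY lXY] := aXY; have [_ vZ nYZ lYZ] := aYZ.
have [sX _ _] := vX; have [sY _ _] := vY; have [sZ _ _] := vZ.
have [_ _ lZ] := vZ; have [_ _ lX] := vX.
case: (comp_or aXY) => [hXY|[hYX|t]]; last by left.
- case: (comp_or aYZ) => [hYZ|[hZY|t]]; last by left.
  + left; apply: (@tri X Y Z); split => //; split => //.
    apply: nl_sub lZ; apply: sum_le => //; try (by move=> m);
    by move=> m /hXY /hYZ.
  + left; apply: (@tri X Y Z); split => //; split => //.
    have [_ _ lY] := vY.
    by apply: nl_sub lY; apply: sum_le.
- case: (comp_or aYZ) => [hYZ|[hZY|t]]; last by left.
  + by right.
  + left; apply: (@tri X Y Z); split => //; split => //.
    apply: nl_sub lX; apply: sum_le => //; try (by move=> m);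
    by move=> m /hZY /hYX.
Qed.

End Aux.

Theorem theorem2p8 (R : comPzRingType) (M : lmodType R)
  (hM : exists m : M, m <> 0)
  (hcomul : comultiplication_module M)
  (hcyc : lsg_has_cycle M) :
  lsg_girth_is M 3.
Proof.
split; last by move=> n c [].
have [n [c [n3 vc dc ac]]] := hcyc.
have n0 : (0 < n)%N by lia.
have n1 : (1 < n)%N by lia.
have a0 := ac 0%N n0.
have a1 := ac 1%N n1.
have a2 := ac 2%N n3.
rewrite !modn_small // in a0 a1.
have d02 : ~ set_eq (c 0%N) (c 2%N) by apply: dc.
have h3 : (3 %% n < n)%N by rewrite ltn_mod.
have d13 : ~ set_eq (c 1%N) (c (3 %% n)%N).
  apply: dc => //.
  move=> e; move: n3; rewrite leq_eqVlt => /orP[/eqP En|lt3].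
    by move: e; rewrite -En.
  by move: e; rewrite modn_small.
case: (path3 a0 a1 d02) => [//|[_ h12]].
case: (path3 a1 a2 d13) => [//|[h21 _]].
have [_ _ n12 _] := a1.
by exfalso; apply: n12 => m; split; [apply: h12|apply: h21].
Qed.
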